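(* Let $c$ be a constant. For unknowns $\vec S_n(t),\bar{\vec S}_n(t)\in\mathbb{C}^m$ and $v_n(t)\in\mathbb{C}$ ($n\in\mathbb{Z}$), consider the discrete multicomponent Yajima--Oikawa system \begin{align*} \mathrm{i}\,\vec S_{n,t}&=v_n(\vec S_{n+1}+\vec S_{n-1})-c\,\vec S_n,\\ \mathrm{i}\,\bar{\vec S}_{n,t}&=-v_n(\bar{\vec S}_{n+1}+\bar{\vec S}_{n-1})+c\,\bar{\vec S}_n,\\ v_{n,t}&=\tfrac12 v_n\,\Delta_n^+\big(\langle\vec S_n,\bar{\vec S}_{n-1}\rangle+\langle\vec S_{n-1},\bar{\vec S}_n\rangle\big). \end{align*} Consider the linear problem for a scalar $\psi_n$ and column vectors $\vec\phi_n,\vec\chi_n\in\mathbb{C}^m$ with constant spectral parameter $\lambda$: \begin{align*} v_n(\psi_{n+1}+\psi_{n-1})&=\lambda\psi_n-\langle\vec S_n,\vec\phi_n\rangle-\langle\vec\chi_n,\bar{\vec S}_n\rangle,\\ \vec\phi_{n+1}-\vec\phi_n&=\tfrac{\mathrm{i}}{2}\bar{\vec S}_n(\psi_{n+1}+\psi_{n-1}),\\ \vec\chi_{n+1}+\vec\chi_n&=\tfrac{\mathrm{i}}{2}\vec S_n(\psi_{n+1}+\psi_{n-1}), \end{align*} together with the time evolution \begin{align*} \mathrm{i}\,\psi_{n,t}&=v_n(\psi_{n+1}+\psi_{n-1})-c\,\psi_n,\\ \vec\phi_{n,t}&=\tfrac12 v_n\bar{\vec S}_{n-1}(\psi_{n+1}+\psi_{n-1})-\tfrac12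 v_{n-1}\bar{\vec S}_n(\psi_n+\psi_{n-2}),\\ \vec\chi_{n,t}&=\tfrac12 v_n\vec S_{n-1}(\psi_{n+1}+\psi_{n-1})+\tfrac12 v_{n-1}\vec S_n(\psi_n+\psi_{n-2})+2\mathrm{i}c\,\vec\chi_n. \end{align*} Then the compatibility condition of these overdetermined linear equations (i.e., the requirement that the $t$-derivatives of the three spatial equations, computed using the time-evolution equations and the first spatial equation to eliminate the time derivatives and $\lambda$, hold identically for arbitrary values of $\psi_n,\vec\phi_n,\vec\chi_n$) is equivalent to the discrete multicomponent Yajima--Oikawa system above.
   Context: Here $n\in\mathbb{Z}$ is the lattice site and $t$ is time; subscript $t$ denotes $\partial/\partial t$. $\langle\vec a,\vec b\rangle=\sum_{i=1}^m a^{(i)}b^{(i)}$ is the standard bilinear scalar product (no complex conjugation). $\Delta_n^+$ is the forward difference operator, $\Delta_n^+f_n:=f_{n+1}-f_n$. The product of a scalar and a column vector is written in either order. $\bar{\vec S}_n$ is an independent vector variable (not necessarily related to the complex conjugate of $\vec S_n$). *)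

(* Defs.v *)
(* Complex numbers are modelled by an arbitrary
   numClosedFieldType C (e.g. algC); 'i is its imaginary unit. *)
From HB Require Import structures.
From mathcomp Require Import all_boot all_order all_algebra.
Set Implicit Arguments. Unset Strict Implicit. Unset Printing Implicit Defensive.
Import Order.TTheory GRing.Theory Num.Theory.
Local Open Scope ring_scope.

(* standard bilinear scalar product <a,b> = sum_i a_i b_i (no conjugation) *)
Definition bil (C : numClosedFieldType) (m : nat) (a b : 'cV[C]_m) : C :=
  \sum_(i < m) a i 0 * b i 0.

Definition fdiff (C : numClosedFieldType) (f : int -> C) (n : int) : C :=
  f (n + 1) - f n.

Definition nsum (C : numClosedFieldType) (psi : int -> C) (n : int) : C :=
  psi (n + 1) + psi (n - 1).

(* The discrete multicomponent Yajima--Oikawa system, at one instant t.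
   S, Sb, v are the values of S_n(t), \bar S_n(t), v_n(t);
   dS, dSb, dv are the values of their t-derivatives. *)
Definition YO_system (C : numClosedFieldType) (m : nat) (c : C)
  (S Sb : int -> 'cV[C]_m) (v : int -> C)
  (dS dSb : int -> 'cV[C]_m) (dv : int -> C) : Prop :=
  forall n : int,
    [/\ 'i *: dS n = v n *: (S (n + 1) + S (n - 1)) - c *: S n,
        'i *: dSb n = - (v n *: (Sb (n + 1) + Sb (n - 1))) + c *: Sb n
      & dv n = 2^-1 * v n *
               fdiff (fun k => bil (S k) (Sb (k - 1)) + bil (S (k - 1)) (Sb k)) n].

(* Compatibility condition of the linear problem.
   psi, phi, chi : values of psi_n(t), phi_n(t), chi_n(t); dpsi, dphi, dchi:
   their t-derivatives, given by the time-evolution equations.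
   The second and third spatial equations are imposed (psi arbitrary, and
   then phi_n, chi_n arbitrary at any site).  The first spatial equation is
   used to eliminate lambda: it says lambda psi_k = Lam k below, so the only
   lambda-dependent term lambda psi_{n,t} of the differentiated first
   equation, which by the evolution of psi equals
   -i (v_n (lambda psi_{n+1} + lambda psi_{n-1}) - c lambda psi_n),
   is replaced by  -i (v_n (Lam (n+1) + Lam (n-1)) - c Lam n). *)
Definition lax_compatible (C : numClosedFieldType) (m : nat) (c : C)
  (S Sb : int -> 'cV[C]_m) (v : int -> C)
  (dS dSb : int -> 'cV[C]_m) (dv : int -> C) : Prop :=
  forall (psi dpsi : int -> C) (phi chi dphi dchi : int -> 'cV[C]_m),
    (forall n : int, phi (n + 1) - phi n = ('i / 2 * nsum psi n) *: Sb n) ->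
    (forall n : int, chi (n + 1) + chi n = ('i / 2 * nsum psi n) *: S n) ->
    (forall n : int, 'i * dpsi n = v n * nsum psi n - c * psi n) ->
    (forall n : int, dphi n = (2^-1 * v n * nsum psi n) *: Sb (n - 1)
                             - (2^-1 * v (n - 1) * (psi n + psi (n - 2))) *: Sb n) ->
    (forall n : int, dchi n = (2^-1 * v n * nsum psi n) *: S (n - 1)
                             + (2^-1 * v (n - 1) * (psi n + psi (n - 2))) *: S n
                             + (2 * 'i * c) *: chi n) ->
    let Lam := fun k : int => v k * nsum psi k + bil (S k) (phi k) + bil (chi k) (Sb k) in
    forall n : int,
      [/\ (* d/dt of  v_n (psi_{n+1}+psi_{n-1}) = lambda psi_n - <S_n,phi_n> - <chi_n,Sb_n> *)
          dv n * nsum psi n + v n * (dpsi (n + 1) + dpsi (n - 1))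
            = - 'i * (v n * (Lam (n + 1) + Lam (n - 1)) - c * Lam n)
              - (bil (dS n) (phi n) + bil (S n) (dphi n))
              - (bil (dchi n) (Sb n) + bil (chi n) (dSb n)),
          (* d/dt of  phi_{n+1} - phi_n = (i/2) Sb_n (psi_{n+1}+psi_{n-1}) *)
          dphi (n + 1) - dphi n
            = ('i / 2 * nsum dpsi n) *: Sb n + ('i / 2 * nsum psi n) *: dSb n
        & (* d/dt of  chi_{n+1} + chi_n = (i/2) S_n (psi_{n+1}+psi_{n-1}) *)
          dchi (n + 1) + dchi n
            = ('i / 2 * nsum dpsi n) *: S n + ('i / 2 * nsum psi n) *: dS n].

(* Main.v *)
Require Import Defs.
From HB Require Import structures.
From mathcomp Require Import all_boot all_order all_algebra.
From mathcomp Require Import ring zify.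
Import Order.TTheory GRing.Theory Num.Theory.
Local Open Scope ring_scope.

Section Bil.
Variables (C : numClosedFieldType) (m : nat).
Implicit Types (x y z : 'cV[C]_m) (a : C).
Lemma bilDl x y z : bil (x + y) z = bil x z + bil y z.
Proof. by rewrite /bil -big_split; apply: eq_bigr => i _; rewrite mxE mulrDl. Qed.
Lemma bilDr x y z : bil z (x + y) = bil z x + bil z y.
Proof. by rewrite /bil -big_split; apply: eq_bigr => i _; rewrite mxE mulrDr. Qed.
Lemma bilZl a x z : bil (a *: x) z = a * bil x z.
Proof. by rewrite /bil mulr_sumr; apply: eq_bigr => i _; rewrite mxE mulrA. Qed.
Lemma bilZr a x z : bil z (a *: x) = a * bil z x.
Proof. by rewrite /bil mulr_sumr; apply: eq_bigr => i _; rewrite mxE mulrCA. Qed.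
Lemma bilNl x z : bil (- x) z = - bil x z.
Proof. by rewrite -scaleN1r bilZl mulN1r. Qed.
Lemma bilNr x z : bil z (- x) = - bil z x.
Proof. by rewrite -scaleN1r bilZr mulN1r. Qed.
Lemma bil0l z : bil 0 z = 0.
Proof. by rewrite -(scale0r (0 : 'cV[C]_m)) bilZl mul0r. Qed.
Lemma bil0r z : bil z 0 = 0.
Proof. by rewrite -(scale0r (0 : 'cV[C]_m)) bilZr mul0r. Qed.
End Bil.

Lemma core (C : numClosedFieldType) (m : nat) (c : C)
  (S Sb : int -> 'cV[C]_m) (v : int -> C)
  (dS dSb : int -> 'cV[C]_m) (dv : int -> C)
  (psi dpsi : int -> C) (phi chi dphi dchi : int -> 'cV[C]_m) (n : int) :
    (forall n : int, phi (n + 1) - phi n = ('i / 2 * nsum psi n) *: Sb n) ->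
    (forall n : int, chi (n + 1) + chi n = ('i / 2 * nsum psi n) *: S n) ->
    (forall n : int, 'i * dpsi n = v n * nsum psi n - c * psi n) ->
    (forall n : int, dphi n = (2^-1 * v n * nsum psi n) *: Sb (n - 1)
                             - (2^-1 * v (n - 1) * (psi n + psi (n - 2))) *: Sb n) ->
    (forall n : int, dchi n = (2^-1 * v n * nsum psi n) *: S (n - 1)
                             + (2^-1 * v (n - 1) * (psi n + psi (n - 2))) *: S n
                             + (2 * 'i * c) *: chi n) ->
    let Lam := fun k : int => v k * nsum psi k + bil (S k) (phi k) + bil (chi k) (Sb k) in
    let E1 := 'i *: dS n - (v n *: (S (n + 1) + S (n - 1)) - c *: S n) in
    let E2 := 'i *: dSb n - (- (v n *: (Sb (n + 1) + Sb (n - 1))) + c *: Sb n) in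
      [/\ (dv n * nsum psi n + v n * (dpsi (n + 1) + dpsi (n - 1)))
            - (- 'i * (v n * (Lam (n + 1) + Lam (n - 1)) - c * Lam n)
              - (bil (dS n) (phi n) + bil (S n) (dphi n))
              - (bil (dchi n) (Sb n) + bil (chi n) (dSb n)))
          = nsum psi n * (dv n - 2^-1 * v n *
               fdiff (fun k => bil (S k) (Sb (k - 1)) + bil (S (k - 1)) (Sb k)) n)
            + 'i^-1 * bil E1 (phi n) + 'i^-1 * bil (chi n) E2,
          (dphi (n + 1) - dphi n)
            - (('i / 2 * nsum dpsi n) *: Sb n + ('i / 2 * nsum psi n) *: dSb n)
          = - (nsum psi n / 2) *: E2
        & (dchi (n + 1) + dchi n)
            - (('i / 2 * nsum dpsi n) *: S n + ('i / 2 * nsum psi n) *: dS n)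
          = - (nsum psi n / 2) *: E1].
Proof.
move=> Hphi Hchi Hpsi Hdphi Hdchi Lam E1 E2.
have hi : ('i : C) != 0 := neq0Ci C.
have h2 : (2 : C) != 0 by rewrite pnatr_eq0.
have hdpsi : forall k, dpsi k = 'i^-1 * (v k * nsum psi k - c * psi k).
  by move=> k; rewrite -Hpsi mulKf.
have hdchi : forall k, dchi k = (2^-1 * v k * nsum psi k) *: S (k - 1)
                             + (2^-1 * v (k - 1) * (psi k + psi (k - 2))) *: S k
                             + (- (2 * c) / 'i) *: chi k.
  by move=> k; rewrite Hdchi invCi; congr (_ + _ *: _); ring.
have e1 : n + 1 + 1 = n + 2 by ring.
have e2 : n + 1 - 1 = n by ring.
have e3 : n - 1 + 1 = n by ring.
have e4 : n - 1 - 1 = n - 2 by ring.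
have e5 : n + 1 - 2 = n - 1 by ring.
have hp1 : phi (n + 1) = phi n + ('i / 2 * nsum psi n) *: Sb n.
  by rewrite -Hphi [phi n + _]addrC subrK.
have hm1 : phi (n - 1) = phi n - ('i / 2 * nsum psi (n - 1)) *: Sb (n - 1).
  by have := Hphi (n - 1); rewrite e3 => <-; rewrite opprB [phi n + _]addrC subrK.
have hc1 : chi (n + 1) = - chi n + ('i / 2 * nsum psi n) *: S n.
  by rewrite -Hchi [- chi n + _]addrC addrK.
have hcm1 : chi (n - 1) = - chi n + ('i / 2 * nsum psi (n - 1)) *: S (n - 1).
  by have := Hchi (n - 1); rewrite e3 => <-; rewrite addKr.
split.
- rewrite (_ : - 'i = 'i^-1); last by rewrite invCi.
  rewrite /Lam /E1 /E2 hdchi (Hdphi n) (hdpsi (n + 1)) (hdpsi (n - 1)) hp1 hm1 hc1 hcm1.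
  rewrite !(bilDl, bilDr, bilNl, bilNr, bilZl, bilZr).
  rewrite /nsum /fdiff ?e1 ?e2 ?e3 ?e4 ?e5.
  field; try done.
- rewrite /E2 (Hdphi (n + 1)) (Hdphi n) /nsum (hdpsi (n + 1)) (hdpsi (n - 1)); apply/matrixP => a b; rewrite !mxE.
  rewrite /nsum ?e1 ?e2 ?e3 ?e4 ?e5.
  field; try done.
- rewrite /E1. rewrite [dchi (n + 1)]hdchi [dchi n]hdchi hc1 /nsum (hdpsi (n + 1)) (hdpsi (n - 1)); apply/matrixP => a b; rewrite !mxE.
  rewrite /nsum ?e1 ?e2 ?e3 ?e4 ?e5.
  field; try done.
Qed.

Section Rec.
Variables (T : Type) (x0 : T) (h hi : int -> T -> T).
Hypothesis hK : forall k x, h k (hi k x) = x.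
Fixpoint fpos (n : nat) : T := match n with 0%N => x0 | n'.+1 => h (Posz n') (fpos n') end.
Fixpoint fneg (n : nat) : T := match n with 0%N => hi (-1) x0 | n'.+1 => hi (Negz n'.+1) (fneg n') end.
Definition fint (k : int) : T := match k with Posz n => fpos n | Negz n => fneg n end.
Lemma fintS k : fint (k + 1) = h k (fint k).
Proof.
case: k => [n|[|n]].
- have -> : (Posz n + 1 = Posz n.+1)%R by rewrite -addn1 PoszD.
  by [].
- have -> : (Negz 0 + 1 = 0)%R by [].
  by rewrite /= hK.
- have -> : (Negz n.+1 + 1 = Negz n)%R by rewrite !NegzE; lia.
  by rewrite /= hK.
Qed.
End Rec.

Theorem proposition2p1 (C : numClosedFieldType) (m : nat) (c : C)
  (S Sb : int -> 'cV[C]_m) (v : int -> C)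
  (dS dSb : int -> 'cV[C]_m) (dv : int -> C) :
  lax_compatible c S Sb v dS dSb dv <-> YO_system c S Sb v dS dSb dv.
Proof.
have hi : ('i : C) != 0 := neq0Ci C.
have h2 : (2 : C) != 0 by rewrite pnatr_eq0.
split.
- move=> H.
  pose psi := fun _ : int => (1 : C).
  pose a := fun k => ('i / 2 * nsum psi k) *: Sb k.
  pose b := fun k => ('i / 2 * nsum psi k) *: S k.
  have [phi Hphi] : exists phi : int -> 'cV[C]_m, forall k, phi (k + 1) - phi k = a k.
    exists (@fint _ 0 (fun k x => x + a k) (fun k x => x - a k)) => k.
    have hK1 : forall k x, (x - a k) + a k = x by move=> k' x; rewrite subrK.
    by rewrite (@fintS _ _ _ _ hK1) addrAC subrr add0r.
  have [chi Hchi] : exists chi : int -> 'cV[C]_m, forall k, chi (k + 1) + chi k = b k.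
    exists (@fint _ 0 (fun k x => - x + b k) (fun k x => - x + b k)) => k.
    have hK2 : forall k x, - (- x + b k) + b k = x by move=> k' x; rewrite opprD opprK addrNK.
    by rewrite (@fintS _ _ _ _ hK2) addrAC addNr add0r.
  pose dpsi := fun k => 'i^-1 * (v k * nsum psi k - c * psi k).
  pose dphi := fun k => (2^-1 * v k * nsum psi k) *: Sb (k - 1)
                             - (2^-1 * v (k - 1) * (psi k + psi (k - 2))) *: Sb k.
  pose dchi := fun k => (2^-1 * v k * nsum psi k) *: S (k - 1)
                             + (2^-1 * v (k - 1) * (psi k + psi (k - 2))) *: S k
                             + (2 * 'i * c) *: chi k.
  have Hpsi : forall k, 'i * dpsi k = v k * nsum psi k - c * psi k.
    by move=> k; rewrite /dpsi mulrA divff // mul1r.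
  have Hall := H psi dpsi phi chi dphi dchi Hphi Hchi Hpsi (fun _ => erefl) (fun _ => erefl).
  cbv zeta in Hall.
  have hN : forall n, nsum psi n / 2 = 1 by move=> n; rewrite /nsum /psi /=; field.
  have hN' : forall n, nsum psi n != 0.
    by move=> n; rewrite /nsum /psi /= -mulr2n pnatr_eq0.
  have Hc := fun n => @core _ _ c S Sb v dS dSb dv psi dpsi phi chi dphi dchi n Hphi Hchi Hpsi (fun _ => erefl) (fun _ => erefl).
  cbv zeta in Hc.
  have YO1 : forall n, 'i *: dS n = v n *: (S (n + 1) + S (n - 1)) - c *: S n.
    move=> n; have [_ _ h3] := Hall n; have [_ _ c3] := Hc n.
    move: c3; rewrite h3 subrr hN scaleN1r => /esym/eqP.
    by rewrite oppr_eq0 subr_eq0 => /eqP.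
  have YO2 : forall n, 'i *: dSb n = - (v n *: (Sb (n + 1) + Sb (n - 1))) + c *: Sb n.
    move=> n; have [_ h2' _] := Hall n; have [_ c2 _] := Hc n.
    move: c2; rewrite h2' subrr hN scaleN1r => /esym/eqP.
    by rewrite oppr_eq0 subr_eq0 => /eqP.
  move=> n; split; [exact: YO1|exact: YO2|].
  have [h1 _ _] := Hall n; have [c1 _ _] := Hc n.
  move: c1; rewrite h1 subrr YO1 YO2 !subrr bil0l bil0r !mulr0 !addr0 => /esym/eqP.
  rewrite mulf_eq0 (negbTE (hN' n)) /= subr_eq0 => /eqP ->.
  by [].
- move=> YO psi dpsi phi chi dphi dchi Hphi Hchi Hpsi Hdphi Hdchi Lam n.
  have [Y1 Y2 Y3] := YO n.
  have := @core _ _ c S Sb v dS dSb dv psi dpsi phi chi dphi dchi n Hphi Hchi Hpsi Hdphi Hdchi.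
  cbv zeta => -[c1 c2 c3].
  split; apply: subr0_eq.
  + by rewrite c1 Y1 Y2 Y3 !subrr bil0l bil0r !mulr0 !addr0.
  + by rewrite c2 Y2 subrr scaler0.
  + by rewrite c3 Y1 subrr scaler0.
Qed.
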